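(* Let $\mathcal{G}=(\mathcal{V},\mathcal{E})$ be a directed graph with activation probabilities $p_{(u,v)}\in[0,1]$ for each edge $(u,v)\in\mathcal{E}$, and let $\mathbf{P}\in[0,1]^{|\mathcal{V}|\times|\mathcal{V}|}$ be the activation probability matrix, whose $(u,v)$-entry is $p_{(u,v)}$ if $(u,v)\in\mathcal{E}$ and $0$ otherwise. Fix a seed set $S\subseteq\mathcal{V}$ and consider the independent cascade process started from $S$. For $i\ge 0$ let $\boldsymbol{\pi}_i\in[0,1]^{|\mathcal{V}|}$ be the row vector whose $x$-entry is $\rho_i(x)$, the probability that node $x$ is infected at some step $\le i$. Then for all $i\geq 2$, $$\boldsymbol{\pi}_i \le \mathbf{u}_i := \boldsymbol{\pi}_{i-1} + (\boldsymbol{\pi}_{i-1}-\boldsymbol{\pi}_{i-2})\mathbf{P}$$ entrywise, i.e., for every $v\in\mathcal{V}$, $\rho_i(v)\le \rho_{i-1}(v)+\sum_{u:(u,v)\in\mathcal{E}}(\rho_{i-1}(u)-\rho_{i-2}(u))\,p_{(u,v)}$.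
   Context: Independent cascade (IC) model: at step $0$ exactly the seed nodes in $S$ are infected. Whenever a node $u$ becomes newly infected at step $t$, it makes a single attempt, independently of everything else, to infect each out-neighbor $v$ (with $(u,v)\in\mathcal{E}$), succeeding with probability $p_{(u,v)}$; an uninfected $v$ infected by such a success becomes infected at step $t+1$. Infected nodes stay infected, and the process stops when no new nodes are infected. $\rho_i(x)$ denotes the probability that $x$ is infected during the first $i$ steps (steps $0,\dots,i$). *)

(* Defs.v *)
From HB Require Import structures.
From mathcomp Require Import all_boot all_order all_algebra.
Set Implicit Arguments. Unset Strict Implicit. Unset Printing Implicit Defensive.
Import Order.TTheory GRing.Theory Num.Theory.
Local Open Scope ring_scope.

Section IC.
Variables (R : realFieldType) (V : finType).
Variables (E : rel V) (p : V -> V -> R) (S : {set V}).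

Definition Pmat (u v : V) : R := if E u v then p u v else 0.

(* An outcome of all the independent attempts: one coin per ordered pair
   (u,v); coin (u,v) = true means "u's single attempt on v succeeds". *)
Definition coins := {ffun V * V -> bool}.

Definition coin_weight (c : coins) : R :=
  \prod_(e : V * V) (if c e then Pmat e.1 e.2 else 1 - Pmat e.1 e.2).

(* (set infected up to step n-1, set infected up to step n) *)
Fixpoint ic_state (c : coins) (n : nat) : {set V} * {set V} :=
  match n with
  | 0 => (set0, S)
  | n'.+1 =>
      let: (A, B) := ic_state c n' in
      (B, B :|: [set v | [exists u, [&& u \in B :\: A, E u v & c (u, v)]]])
  end.

Definition infected (c : coins) (n : nat) : {set V} := (ic_state c n).2.

Definition rho (i : nat) (x : V) : R :=
  \sum_(c : coins) coin_weight c * (x \in infected c i)%:R.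

End IC.

(* Main.v *)
Require Import Defs.
From HB Require Import structures.
From mathcomp Require Import all_boot all_order all_algebra ring.
Set Implicit Arguments. Unset Strict Implicit. Unset Printing Implicit Defensive.
Import Order.TTheory GRing.Theory Num.Theory.
Local Open Scope ring_scope.

Lemma state_fst (V : finType) (E : rel V) (S : {set V}) (c : coins V) n :
  (ic_state E S c n.+1).1 = (ic_state E S c n).2.
Proof. by rewrite /=; case: (ic_state E S c n). Qed.

Lemma state_sub (V : finType) (E : rel V) (S : {set V}) (c : coins V) n :
  (ic_state E S c n).1 \subset (ic_state E S c n).2.
Proof.
case: n => [|n] /=; first exact: sub0set.
by case: (ic_state E S c n) => A B /=; apply: subsetUl.
Qed.

Lemma state_indep (V : finType) (E : rel V) (S : {set V}) (c c' : coins V) u v :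
  (forall e, e != (u, v) -> c e = c' e) ->
  forall n, u \notin (ic_state E S c n).1 -> ic_state E S c n = ic_state E S c' n.
Proof.
move=> hc; elim=> [|n IH] // Hu.
have HuB : u \notin (ic_state E S c n).2 by rewrite -state_fst.
have HuA : u \notin (ic_state E S c n).1.
  by apply/negP => h; move/negP: HuB; apply; move/subsetP: (state_sub E S c n); apply.
rewrite /= -(IH HuA).
move: HuB; case: (ic_state E S c n) => A B /= HuB.
congr pair; apply/setP => x; rewrite !inE; congr (_ || _).
apply: eq_existsb => w.
case hw: (w \in B :\: A) => //=.
have hwu : w != u.
  by apply: contraNneq HuB => <-; move: hw; rewrite inE => /andP[].
by rewrite hc // xpair_eqE negb_and hwu.
Qed.

Definition gi (V : finType) (E : rel V) (S : {set V}) (n : nat) (u : V) (c : coins V) : bool :=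
  u \in (ic_state E S c n.+1).2 :\: (ic_state E S c n.+1).1.

Lemma gi_flip (V : finType) (E : rel V) (S : {set V}) n (c c' : coins V) u v :
  (forall e, e != (u, v) -> c e = c' e) -> gi E S n u c = gi E S n u c'.
Proof.
move=> hc; rewrite /gi.
case Hc: (u \in (ic_state E S c n.+1).1).
  case Hc': (u \in (ic_state E S c' n.+1).1).
    by rewrite !inE Hc Hc'.
  have hc2 : forall e, e != (u, v) -> c' e = c e by move=> e /hc ->.
  by rewrite (state_indep hc2 (negbT Hc')).
by rewrite (state_indep hc (negbT Hc)).
Qed.
Lemma factor (R : realFieldType) (V : finType) (E : rel V) (p : V -> V -> R)
  (e0 : V * V) (g : coins V -> R)
  (hg : forall c c' : coins V, (forall e, e != e0 -> c e = c' e) -> g c = g c') :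
  \sum_(c : coins V) coin_weight E p c * (g c * (c e0)%:R)
  = Pmat E p e0.1 e0.2 * \sum_(c : coins V) coin_weight E p c * g c.
Proof.
pose f := fun (c : coins V) (e : V * V) =>
  if c e then Pmat E p e.1 e.2 else 1 - Pmat E p e.1 e.2.
pose rest := fun c => \prod_(e | e != e0) f c e.
have hw : forall c, coin_weight E p c = f c e0 * rest c.
  by move=> c; rewrite /coin_weight (bigD1 e0).
pose fl := fun c : coins V => [ffun e => if e == e0 then ~~ c e0 else c e].
have flK : involutive fl.
  move=> c; apply/ffunP => e; rewrite !ffunE.
  by case: eqP => [->|//]; rewrite eqxx negbK.
have flr : forall c, rest (fl c) = rest c.
  by move=> c; apply: eq_bigr => e he; rewrite /f ffunE (negbTE he).
have flg : forall c, g (fl c) = g c.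
  by move=> c; apply: hg => e he; rewrite ffunE (negbTE he).
set Pm := Pmat E p e0.1 e0.2.
rewrite (bigID (fun c : coins V => c e0)) /= [X in _ + X]big1; last first.
  by move=> c /negbTE ->; rewrite mulr0 mulr0.
rewrite addr0 (bigID (fun c : coins V => c e0) predT) /=.
rewrite [X in _ * (_ + X)](reindex_inj (inv_inj flK)) /=.
have -> : \sum_(j : coins V | ~~ fl j e0) coin_weight E p (fl j) * g (fl j)
        = \sum_(j : coins V | j e0) (1 - Pm) * (rest j * g j).
  apply: eq_big => [c|c hc]; first by rewrite ffunE eqxx negbK.
  have hc2 : c e0 by move: hc; rewrite ffunE eqxx negbK.
  by rewrite hw flr flg /f ffunE eqxx hc2 /= mulrA.
rewrite -big_split /= mulr_sumr; apply: eq_bigr => c hc.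
rewrite hw /f hc /= mulr1 -/Pm; ring.
Qed.

Lemma pointwise (R : realFieldType) (V : finType) (E : rel V) (S : {set V}) n
  (c : coins V) v :
  ((v \in infected E S c n.+2)%:R - (v \in infected E S c n.+1)%:R : R)
  <= \sum_(u | E u v) (gi E S n u c)%:R * (c (u, v))%:R.
Proof.
have hsum : 0 <= \sum_(u | E u v) ((gi E S n u c)%:R * (c (u, v))%:R : R).
  by apply: sumr_ge0 => u _; rewrite mulr_ge0 ?ler0n.
case Hv1: (v \in infected E S c n.+1).
  have -> : v \in infected E S c n.+2.
    by move/subsetP: (state_sub E S c n.+2); apply; rewrite state_fst.
  by rewrite subrr.
case Hv2: (v \in infected E S c n.+2); last by rewrite subrr.
rewrite subr0.
move: Hv2 Hv1; rewrite /infected /gi /=.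
case: (ic_state E S c n) => A0 A /=.
set B := A :|: _ => Hv2 Hv1.
move: Hv2; rewrite inE Hv1 /= inE => /existsP [u /and3P [hu hE hc]].
rewrite (bigD1 u) //= hc hu.
rewrite mulr1 lerDl; apply: sumr_ge0 => w _; by rewrite mulr_ge0 ?ler0n.
Qed.

Lemma weight_ge0 (R : realFieldType) (V : finType) (E : rel V) (p : V -> V -> R)
  (hp : forall u v, E u v -> 0 <= p u v <= 1) (c : coins V) :
  0 <= coin_weight E p c.
Proof.
apply: prodr_ge0 => e _; rewrite /Pmat.
case: (E e.1 e.2) (hp e.1 e.2) => [/(_ isT) /andP[h0 h1]|_]; case: (c e) => //.
- by rewrite subr_ge0.
- by rewrite subr0.
Qed.

Lemma gi_rho (R : realFieldType) (V : finType) (E : rel V) (p : V -> V -> R)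
  (S : {set V}) n u :
  \sum_(c : coins V) coin_weight E p c * (gi E S n u c)%:R
  = rho E p S n.+1 u - rho E p S n u.
Proof.
rewrite /rho -sumrB; apply: eq_bigr => c _; rewrite -mulrBr; congr (_ * _).
rewrite /gi /infected -(state_fst E S c n) inE.
have sub := subsetP (state_sub E S c n.+1) u.
case h1: (u \in (ic_state E S c n.+1).1); case h2: (u \in (ic_state E S c n.+1).2);
  rewrite ?subrr ?subr0 //.
by move: (sub h1); rewrite h2.
Qed.

Theorem theorem1 (R : realFieldType) (V : finType) (E : rel V)
  (p : V -> V -> R) (S : {set V})
  (hp : forall u v, E u v -> 0 <= p u v <= 1)
  (i : nat) (hi : (2 <= i)%N) (v : V) :
  rho E p S i v <=
    rho E p S i.-1 v +
    \sum_(u : V | E u v) (rho E p S i.-1 u - rho E p S i.-2 u) * p u v.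
Proof.
case: i hi => [|[|n]] // _ /=.
rewrite -lerBlDl.
have -> : rho E p S n.+2 v - rho E p S n.+1 v
   = \sum_(c : coins V) coin_weight E p c *
       ((v \in infected E S c n.+2)%:R - (v \in infected E S c n.+1)%:R).
  by rewrite /rho -sumrB; apply: eq_bigr => c _; rewrite mulrBr.
apply: le_trans (_ : \sum_(c : coins V) coin_weight E p c *
   \sum_(u | E u v) (gi E S n u c)%:R * (c (u, v))%:R <= _).
  apply: ler_sum => c _; apply: ler_wpM2l; first exact: weight_ge0.
  exact: pointwise.
rewrite [X in X <= _](eq_bigr (fun c : coins V => \sum_(u | E u v) coin_weight E p c * ((gi E S n u c)%:R * (c (u, v))%:R))); last by move=> c _; rewrite mulr_sumr.
rewrite exchange_big /= le_eqVlt; apply/orP; left; apply/eqP.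
apply: eq_bigr => u hE.
rewrite (@factor R V E p (u, v) (fun c => (gi E S n u c)%:R)); last first.
  by move=> c c' hc; rewrite (gi_flip E S n hc).
by rewrite gi_rho /Pmat /= hE mulrC.
Qed.
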